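(* In any mixed signaling scheme, there is no non-splittable signal $S$ with $|\{w_1(j): j\in S\}|\ge 3$.
   Context: Setting: $n\ge 2$ bidders, $m$ item types with probabilities $p_j$, nonnegative valuations $v_{i,j}$; $\psi_{i,j}=p_jv_{i,j}$. A mixed signaling scheme is a finite signal set $\mathcal{S}$ and $\varphi:[m]\times\mathcal{S}\to[0,1]$ with $\sum_S\varphi(j,S)=1$ for each $j$; $\varphi_{j,S}=\varphi(j,S)$; a signal is identified with its support, so $j\in S$ means $\varphi_{j,S}>0$. Ties are broken by a fixed priority order on bidders; $w_1(j)$ is the bidder maximizing $\psi_{i,j}$. For a signal $S$ and a subset $T\subseteq S$ define $\mathrm{rev}_S(T)=\mathrm{max2}_i\sum_{j\in T}\varphi_{j,S}\psi_{i,j}$ (second-largest value over bidders, with multiplicity), and $\mathrm{rev}(S)=\mathrm{rev}_S(S)$. $S$ is splittable if there is a partition $S=S_1\cup\dots\cup S_t$ into $t\ge 2$ nonempty parts with $\sum_{k=1}^t\mathrm{rev}_S(S_k)\ge\mathrm{rev}(S)$; otherwise $S$ is non-splittable. *)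

(* Defs.v *)
From HB Require Import structures.
From mathcomp Require Import all_boot all_order all_algebra.
Set Implicit Arguments. Unset Strict Implicit. Unset Printing Implicit Defensive.
Import Order.TTheory GRing.Theory Num.Theory.
Local Open Scope ring_scope.

Section Auction.
Variables (R : realFieldType) (B I Sig : finType).

Definition psi (p : I -> R) (v : B -> I -> R) (i : B) (j : I) : R := p j * v i j.

(* second-largest value (with multiplicity) of f over the bidders:
   entry of index 1 of the values sorted in non-increasing order *)
Definition max2 (f : B -> R) : R :=
  nth 0 (sort (fun x y : R => y <= x) [seq f i | i <- enum B]) 1.

(* the signal s, identified with its support *)
Definition support (phi : I -> Sig -> R) (s : Sig) : {set I} :=
  [set j | 0 < phi j s].

Definition rev_on (phi : I -> Sig -> R) (ps : B -> I -> R) (s : Sig) (T : {set I}) : R :=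
  max2 (fun i => \sum_(j in T) phi j s * ps i j).

Definition rev_sig phi ps s := rev_on phi ps s (support phi s).

Definition splittable (phi : I -> Sig -> R) (ps : B -> I -> R) (s : Sig) : Prop :=
  exists P : {set {set I}},
    [/\ partition P (support phi s), (1 < #|P|)%N &
        rev_sig phi ps s <= \sum_(T in P) rev_on phi ps s T].

Definition non_splittable phi ps s : Prop := ~ splittable phi ps s.

Definition is_w1 (ps : B -> I -> R) (prio : B -> nat) (j : I) (i : B) : bool :=
  [forall k, (ps k j < ps i j) || ((ps k j == ps i j) && (prio i <= prio k)%N)].

Definition winners (phi : I -> Sig -> R) (ps : B -> I -> R) (prio : B -> nat) (s : Sig)
  : {set B} :=
  [set i | [exists j in support phi s, is_w1 ps prio j i]].

End Auction.

(* Main.v *)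
Require Import Defs.
From HB Require Import structures.
From mathcomp Require Import all_boot all_order all_algebra.
Import Order.TTheory GRing.Theory Num.Theory.
Local Open Scope ring_scope.
Set Implicit Arguments. Unset Strict Implicit.

Lemma cnt_card (B : finType) (q : pred B) : count q (enum B) = #|q|.
Proof. rewrite cardE /enum_mem size_filter -enumT /= count_filter. apply: eq_count => x /=. by rewrite andbT. Qed.

Section M2.
Variables (R : realFieldType) (B : finType).

Lemma max2_shape (f : B -> R) : (2 <= #|B|)%N ->
  exists x0 rest, sort (fun x y : R => y <= x) [seq f i | i <- enum B] = x0 :: max2 f :: rest
    /\ max2 f <= x0 /\ all (fun y => y <= max2 f) rest.
Proof.
move=> hB.
have tr : transitive (fun x y : R => y <= x) by move=> x y z h1 h2; exact: le_trans h2 h1.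
have so : sorted (fun x y : R => y <= x) (sort (fun x y : R => y <= x) [seq f i | i <- enum B]).
  by apply: sort_sorted => x y; rewrite le_total.
have sz := size_sort (fun x y : R => y <= x) [seq f i | i <- enum B].
rewrite size_map -cardE in sz.
rewrite /max2; move: so sz.
case: (sort _ _) => [|x0 [|x1 rest]] /=; rewrite -?sz //.
- by move=> _ h; rewrite -h in hB.
- by move=> _ h; rewrite -h in hB.
move=> /andP[h01 hp] _; exists x0, rest; split=> //; split=> //.
exact: order_path_min hp.
Qed.

Lemma max2_lb (f : B -> R) a b x : a != b -> x <= f a -> x <= f b -> x <= max2 f.
Proof.
move=> ab ha hb.
have hB : (2 <= #|B|)%N by apply/card_gt1P; exists a, b.
have [x0 [rest [hs [h0 hr]]]] := max2_shape f hB.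
rewrite leNgt; apply/negP => hlt.
have hp : perm_eq (sort (fun x y : R => y <= x) [seq f i | i <- enum B]) [seq f i | i <- enum B].
  by rewrite perm_sort perm_refl.
have := (permP hp) (fun y : R => max2 f < y).
rewrite hs count_map cnt_card /= ltxx add0n.
have -> : count (fun y : R => max2 f < y) rest = 0%N.
  by apply/eqP; rewrite -leqn0 leqNgt -has_count; apply/hasPn => y /(allP hr); rewrite leNgt.
have h1 : (1 < #|[pred i | (max2 f < f i)%R]|)%N.
  apply/card_gt1P; exists a, b; rewrite !inE ab; split=> //.
  - exact: lt_le_trans hlt ha.
  - exact: lt_le_trans hlt hb.
move=> h2; move: h1; rewrite -[X in (_ < X)%N]h2 addn0.
by case: (max2 f < x0).
Qed.

Lemma max2_ub (f : B -> R) : (2 <= #|B|)%N ->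
  exists c d, [/\ c != d, max2 f <= f c & max2 f <= f d].
Proof.
move=> hB.
have [x0 [rest [hs [h0 hr]]]] := max2_shape f hB.
have hp : perm_eq (sort (fun x y : R => y <= x) [seq f i | i <- enum B]) [seq f i | i <- enum B].
  by rewrite perm_sort perm_refl.
have := (permP hp) (fun y : R => max2 f <= y).
rewrite hs count_map cnt_card /= lexx h0 => h.
have : (1 < #|[pred i | (max2 f <= f i)%R]|)%N.
  by rewrite -[X in (_ < X)%N]h.
move=> /card_gt1P [c [d [hc hd cd]]]; exists c, d; split=> //.
Qed.
End M2.

Lemma pick3 (T : finType) (W : {set T}) c d : (2 < #|W|)%N ->
  exists w w', [/\ w \in W, w' \in W, w != w', w != c & w != d].
Proof.
move=> /card_gt2P [x [y [z [[hx hy hz] [xy yz zx]]]]].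
have [hxc|hxc] := boolP ((x != c) && (x != d)).
  by case/andP: hxc => h1 h2; exists x, y.
have [hyc|hyc] := boolP ((y != c) && (y != d)).
  by case/andP: hyc => h1 h2; exists y, z.
exists z, x; split=> //.
- apply/eqP => ezc; move: hxc hyc; rewrite !negb_and !negbK -ezc.
  case/orP=>/eqP ex; case/orP=>/eqP ey; subst; by rewrite ?eqxx in xy yz zx.
- apply/eqP => ezc; move: hxc hyc; rewrite !negb_and !negbK -ezc.
  case/orP=>/eqP ex; case/orP=>/eqP ey; subst; by rewrite ?eqxx in xy yz zx.
Qed.

Lemma w1_uniq (R : realFieldType) (B I : finType) (ps : B -> I -> R) prio j w w' :
  injective prio -> is_w1 ps prio j w -> is_w1 ps prio j w' -> w = w'.
Proof.
move=> inj /forallP /(_ w') h1 /forallP /(_ w) h2.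
apply: inj; apply/eqP; rewrite eqn_leq.
case/orP: h1 => [h1|/andP[/eqP e1 p1]].
  by case/orP: h2 => [h2|/andP[/eqP e2 _]]; [rewrite ltNge (ltW h1) in h2 | rewrite e2 ltxx in h1].
case/orP: h2 => [h2|/andP[_ p2]]; first by rewrite e1 ltxx in h2.
by rewrite p1 p2.
Qed.

Theorem claim3 (R : realFieldType) (B I Sig : finType)
  (p : I -> R) (v : B -> I -> R) (phi : I -> Sig -> R) (prio : B -> nat) :
  (2 <= #|B|)%N ->
  injective prio ->
  (forall j, 0 <= p j) -> \sum_(j : I) p j = 1 ->
  (forall i j, 0 <= v i j) ->
  (forall j s, 0 <= phi j s <= 1) ->
  (forall j, \sum_(s : Sig) phi j s = 1) ->
  forall s : Sig,
    ~ (non_splittable phi (psi p v) s /\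
       (3 <= #|winners phi (psi p v) prio s|)%N).
Proof.
move=> hB inj _ _ _ _ _ s [hns hW]; apply: hns.
set ps := psi p v.
set S := Defs.support phi s.
set x := fun (T : {set I}) i => \sum_(j in T) phi j s * ps i j.
have revE : forall T, rev_on phi ps s T = max2 (x T) by [].
have [c [d [cd hc hd]]] := max2_ub (x S) hB.
have [w [w' [hw hw' ww' wc wd]]] := pick3 c d hW.
move: hw hw'; rewrite !inE => /existsP [j0 /andP [j0S j0w]] /existsP [j1 /andP [j1S j1w]].
rewrite -/S in j0S j1S.
set Wj := [set j | is_w1 ps prio j w].
set T1 := S :&: Wj. set T2 := S :\: Wj.
rewrite -/ps in j0w j1w.
have j0T1 : j0 \in T1 by rewrite in_setI j0S inE j0w.
have j1T2 : j1 \in T2.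
  rewrite in_setD j1S andbT inE; apply/negP => h.
  by move: ww'; rewrite (w1_uniq inj h j1w) eqxx.
have T12 : T1 != T2.
  by apply/negP => /eqP e; move: j0T1; rewrite e !inE j0w.
have T2T1 : T1 \notin [set T2] by rewrite inE.
exists [set T1; T2]; split.
- apply/and3P; split.
  + by rewrite /cover big_setU1 //= big_set1 setID.
  + apply/trivIsetP => A A' /set2P hA /set2P hA' AA'.
    have D12 : [disjoint T1 & T2].
      rewrite disjoints_subset; apply/subsetP => j.
      by rewrite /T1 /T2 !inE => /andP[_ ->].
    case: hA => -> in AA' *; case: hA' => -> in AA' *; rewrite ?eqxx // in AA'.
    by rewrite disjoint_sym.
  + apply/negP => /set2P [] e.
      by move: j0T1; rewrite -e inE.
    by move: j1T2; rewrite -e inE.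
- by rewrite cards2 T12.
rewrite big_setU1 //= big_set1 /rev_sig !revE.
have xS : forall i, x S i = x T1 i + x T2 i.
  by move=> i; rewrite /x (big_setID (A:=S) Wj).
have ge1 : forall i, x T1 i <= x T1 w.
  move=> i; apply: ler_sum => j; rewrite in_setI inE => /andP [hj hjw].
  move: hj => /ltW phj.
  apply: ler_wpM2l => //.
  move: hjw; rewrite inE => /forallP => /(_ i) /orP [/ltW //|/andP[/eqP -> _]] //.
have m1c : x T1 c <= max2 (x T1) by apply: (max2_lb wc).
have m1d : x T1 d <= max2 (x T1) by apply: (max2_lb wd).
have [h|h] := leP (x T2 c) (x T2 d).
- have : x T2 c <= max2 (x T2) by apply: (max2_lb cd) => //.
  move: hc; rewrite xS => hc' h2.
  apply: le_trans hc' _; exact: lerD.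
- have : x T2 d <= max2 (x T2) by apply: (max2_lb cd) => //; exact: ltW.
  move: hd; rewrite xS => hd' h2.
  apply: le_trans hd' _; exact: lerD.
Qed.
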